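(* Let $\mu>0$ and $f\in C([0,1])$. Then $|\mathscr{L}_n^K(f,x)-f(x)|=o(n^{-1})$ as $n\to+\infty$ for every $0<x<1$ if and only if $f$ is a classical solution on $(0,1)$ of the differential equation $A(x)f_\mu'(x)+B(x)f_\mu''(x)=0$, where $A(x):=\frac12+\frac{x-x^2}{2(1+\mu)}-x$ and $B(x):=\frac{x-x^2}{2}$; equivalently, $\big(1+\mu-x(1+2\mu)-x^2\big)f_\mu'(x)+(1+\mu)(x-x^2)f_\mu''(x)=0$, $0<x<1$.
   Context: Fix $\mu>0$. Let $\ln_\mu(x):=\ln(1+\mu+x)$ for $x\in[0,1]$, and for $f:[0,1]\to\mathbb{R}$ let $f_\mu(x):=f(x)/\ln_\mu(x)$. Let $p_{n,k}(y):=\binom{n}{k}y^k(1-y)^{n-k}$ and $a_{n+1}(x):=\dfrac{\ln\left(1+\frac{x}{(n+1)(1+\mu)}\right)}{\ln\left(1+\frac{1}{(n+1)(1+\mu)}\right)}$, $x\in[0,1]$. For $n\in\mathbb{N}$ define $\mathscr{L}_n^K(f,x)=\mathscr{L}_n^K f(x):=\ln_\mu(x)\sum_{k=0}^n p_{n,k}(a_{n+1}(x))\,(n+1)\int_{k/(n+1)}^{(k+1)/(n+1)} f_\mu(t)\,dt$, $x\in[0,1]$. *)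

(* Defs.v *)
From Stdlib Require Import Reals.
From Coquelicot Require Import Coquelicot.
Open Scope R_scope.

Definition lnmu (mu x : R) : R := ln (1 + mu + x).

Definition fmu (mu : R) (f : R -> R) (x : R) : R := f x / lnmu mu x.

Definition pnk (n k : nat) (y : R) : R := Binomial.C n k * y ^ k * (1 - y) ^ (n - k).

Definition a_succ (mu : R) (n : nat) (x : R) : R :=
  ln (1 + x / ((INR n + 1) * (1 + mu))) / ln (1 + 1 / ((INR n + 1) * (1 + mu))).

Definition LK (mu : R) (n : nat) (f : R -> R) (x : R) : R :=
  lnmu mu x *
  sum_f_R0 (fun k => pnk n k (a_succ mu n x) * (INR n + 1) *
                     RInt (fmu mu f) (INR k / (INR n + 1)) (INR (S k) / (INR n + 1))) n.

Definition Acoef (mu x : R) : R := / 2 + (x - x ^ 2) / (2 * (1 + mu)) - x.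
Definition Bcoef (x : R) : R := (x - x ^ 2) / 2.

(* Main.v *)
Require Import Defs.
From Stdlib Require Import Reals.
From Coquelicot Require Import Coquelicot.
From Stdlib Require Import Lra Lia Psatz.
Open Scope R_scope.

Lemma deriv_cont (g : R -> R) x l : is_derive g x l -> continuity_pt g x.
Proof.
  intro H. apply continuity_pt_filterlim.
  apply (ex_derive_continuous g x). now exists l.
Qed.

Lemma incr_deriv (g dg : R -> R) a b : a <= b ->
  (forall x, a <= x <= b -> is_derive g x (dg x)) ->
  (forall x, a <= x <= b -> 0 <= dg x) -> g a <= g b.
Proof.
  intros hab hd hp.
  destruct (MVT_gen g a b dg) as [c [hc he]].
  - intros x hx. rewrite Rmin_left in hx; auto. rewrite Rmax_right in hx; auto.
    apply hd; lra.
  - intros x hx. rewrite Rmin_left in hx; auto. rewrite Rmax_right in hx; auto.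
    apply (deriv_cont g x (dg x)). apply hd; lra.
  - rewrite Rmin_left in hc; auto. rewrite Rmax_right in hc; auto.
    assert (0 <= dg c * (b - a)) by (apply Rmult_le_pos; [apply hp; lra| lra]).
    lra.
Qed.

Lemma ln_lower s : 0 <= s -> s - s^2/2 <= ln (1 + s).
Proof.
  intro hs.
  assert (H := incr_deriv (fun t => ln (1+t) - t + t^2/2) (fun t => t^2/(1+t)) 0 s hs).
  cbv beta in H; rewrite Rplus_0_r, ln_1 in H.
  assert (0 <= ln (1 + s) - s + s ^ 2 / 2); [|lra].
  replace (0 - 0 + 0^2/2) with 0 in H by (simpl; field).
  apply H.
  - intros x hx. auto_derive. lra. field. lra.
  - intros x hx. apply Rdiv_le_0_compat. nra. lra.
Qed.

Lemma ln_upper s : 0 <= s -> ln (1 + s) <= s - s^2/2 + s^3/3.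
Proof.
  intro hs.
  assert (H := incr_deriv (fun t => t - t^2/2 + t^3/3 - ln (1+t)) (fun t => t^3/(1+t)) 0 s hs).
  cbv beta in H; rewrite Rplus_0_r, ln_1 in H.
  replace (0 - 0^2/2 + 0^3/3 - 0) with 0 in H by (simpl; field).
  assert (0 <= s - s ^ 2 / 2 + s ^ 3 / 3 - ln (1 + s)); [|lra].
  apply H.
  - intros x hx. auto_derive. lra. field. lra.
  - intros x hx. apply Rdiv_le_0_compat. assert (0 <= x^3) by (apply pow_le; lra). lra. lra.
Qed.

Lemma exp_up s : 0 <= s <= 1/2 -> exp s - 1 - s <= 2 * s^2.
Proof.
  intro hs. pose proof (exp_ineq1_le (-s)) as h.
  assert (hp : exp s * exp (-s) = 1) by (rewrite <- exp_plus; replace (s + - s) with 0 by ring; apply exp_0).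
  assert (exp s * (1 - s) <= 1).
  { assert (exp s * (1 - s) <= exp s * exp (-s)) by (apply Rmult_le_compat_l; [left; apply exp_pos| lra]). lra. }
  assert (exp s <= 1/(1-s)). { apply (Rmult_le_reg_r (1 - s)). lra. field_simplify; lra. }
  assert (1/(1-s) - 1 - s <= 2 * s^2).
  { apply (Rmult_le_reg_r (1 - s)). lra. field_simplify; try lra. nra. }
  lra.
Qed.

Lemma exp_dn s : 0 <= s -> exp (-s) - 1 + s <= 2 * s^2.
Proof.
  intro hs. pose proof (exp_ineq1_le s) as h.
  assert (hp : exp s * exp (-s) = 1) by (rewrite <- exp_plus; replace (s + - s) with 0 by ring; apply exp_0).
  assert (exp (-s) * (1 + s) <= 1).
  { assert (exp (-s) * (1+s) <= exp (-s) * exp s) by (apply Rmult_le_compat_l; [left; apply exp_pos| lra]). lra. }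
  assert (exp (-s) <= 1/(1+s)). { apply (Rmult_le_reg_r (1 + s)). lra. field_simplify; lra. }
  assert (1/(1+s) - 1 + s <= 2 * s^2).
  { apply (Rmult_le_reg_r (1 + s)). lra. field_simplify; try lra. nra. }
  lra.
Qed.

Lemma pow_exp s k : exp s ^ k = exp (s * INR k).
Proof.
  induction k. simpl. rewrite Rmult_0_r, exp_0. auto.
  rewrite S_INR. simpl. rewrite IHk. rewrite <- exp_plus. f_equal. ring.
Qed.

Lemma exp_big x : 0 <= x -> x^2/4 <= exp x.
Proof.
  intro hx. pose proof (exp_ineq1_le (x/2)) as h.
  replace (exp x) with (exp (x/2) * exp (x/2)) by (rewrite <- exp_plus; f_equal; field).
  nra.
Qed.

Lemma sum_pnk n y : sum_f_R0 (fun k => pnk n k y) n = 1.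
Proof.
  unfold pnk. rewrite <- binomial. replace (y + (1 - y)) with 1 by ring. apply pow1.
Qed.

Lemma C_pos n k : 0 < Binomial.C n k.
Proof.
  unfold Binomial.C. apply Rdiv_lt_0_compat. apply INR_fact_lt_0.
  apply Rmult_lt_0_compat; apply INR_fact_lt_0.
Qed.

Lemma pnk_nonneg n k y : 0 <= y <= 1 -> 0 <= pnk n k y.
Proof.
  intro hy. unfold pnk. apply Rmult_le_pos. apply Rmult_le_pos.
  left; apply C_pos. apply pow_le; lra. apply pow_le; lra.
Qed.

Lemma pnk_key m i y : (i <= m)%nat ->
  (INR i + 1) * pnk (S m) (S i) y = INR (S m) * y * pnk m i y.
Proof.
  intro hi. unfold pnk, Binomial.C.
  replace (S m - S i)%nat with (m - i)%nat by lia.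
  rewrite !fact_simpl, !mult_INR, !S_INR.
  simpl pow.
  field. repeat split; try apply INR_fact_neq_0. pose proof (pos_INR i). lra.
Qed.

Lemma sum_M1 n y : sum_f_R0 (fun k => INR k * pnk n k y) n = INR n * y.
Proof.
  destruct n as [|m].
  - simpl. ring.
  - rewrite decomp_sum by lia. simpl Init.Nat.pred.
    rewrite Rmult_0_l, Rplus_0_l.
    rewrite (sum_eq _ (fun i => pnk m i y * (INR (S m) * y))).
    + rewrite <- scal_sum, sum_pnk. ring.
    + intros i hi. rewrite S_INR at 1. rewrite pnk_key by lia. ring.
Qed.

Lemma sum_F2 n y : sum_f_R0 (fun k => INR k * (INR k - 1) * pnk n k y) n = INR n * (INR n - 1) * y^2.
Proof.
  destruct n as [|m].
  - simpl. ring.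
  - rewrite decomp_sum by lia. simpl Init.Nat.pred.
    rewrite Rmult_0_l, Rmult_0_l, Rplus_0_l.
    rewrite (sum_eq _ (fun i => INR i * pnk m i y * (INR (S m) * y))).
    + rewrite <- scal_sum, sum_M1. rewrite S_INR. ring.
    + intros i hi. rewrite S_INR at 1 2.
      replace ((INR i + 1) * (INR i + 1 - 1) * pnk (S m) (S i) y) with
        (INR i * ((INR i + 1) * pnk (S m) (S i) y)) by ring.
      rewrite pnk_key by lia. ring.
Qed.

Lemma sum_M2 n y : sum_f_R0 (fun k => INR k ^ 2 * pnk n k y) n = INR n * y + INR n * (INR n - 1) * y^2.
Proof.
  rewrite <- sum_F2, <- sum_M1, <- plus_sum. apply sum_eq. intros. ring.
Qed.

Lemma sum_quad n y a b c :
  sum_f_R0 (fun k => pnk n k y * (a + b * INR k + c * INR k ^ 2)) n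
  = a + b * (INR n * y) + c * (INR n * y + INR n * (INR n - 1) * y^2).
Proof.
  rewrite (sum_eq _ (fun k => (pnk n k y * a + INR k * pnk n k y * b) + INR k ^2 * pnk n k y * c)) by (intros; ring).
  rewrite !plus_sum.
  rewrite <- (scal_sum (fun k => pnk n k y)), <- (scal_sum (fun k => INR k * pnk n k y)), <- (scal_sum (fun k => INR k ^ 2 * pnk n k y)).
  rewrite sum_pnk, sum_M1, sum_M2. ring.
Qed.

Lemma sum_mgf n y z : sum_f_R0 (fun k => pnk n k y * z ^ k) n = (y * z + (1 - y)) ^ n.
Proof.
  rewrite binomial. apply sum_eq. intros. unfold pnk. rewrite Rpow_mult_distr. ring.
Qed.

Lemma invN_lim : is_lim_seq (fun n => / (INR n + 1)) 0.
Proof.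
  assert (H := is_lim_seq_inv _ _ is_lim_seq_INR).
  simpl in H. assert (H' : is_lim_seq (fun n => / INR n) 0) by (apply H; discriminate).
  apply is_lim_seq_incr_1 in H'.
  eapply is_lim_seq_ext; [|exact H']. intro n. cbv beta. rewrite <- S_INR. reflexivity.
Qed.

Lemma nN_lim : is_lim_seq (fun n => INR n / (INR n + 1)) 1.
Proof.
  assert (H := is_lim_seq_minus' _ _ _ _ (is_lim_seq_const 1) invN_lim).
  rewrite Rminus_0_r in H.
  eapply is_lim_seq_ext; [|exact H]. intro n. simpl. field. pose proof (pos_INR n). lra.
Qed.

Lemma le_div_r a b c : 0 < c -> a * c <= b -> a <= b / c.
Proof. intros hc h. apply (Rmult_le_reg_r c); auto. replace (b / c * c) with b by (field; lra). auto. Qed.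
Lemma div_le_r a b c : 0 < c -> b <= a * c -> b / c <= a.
Proof. intros hc h. apply (Rmult_le_reg_r c); auto. replace (b / c * c) with b by (field; lra). auto. Qed.

Lemma lim_eq u (l1 l2 : R) : is_lim_seq u l1 -> l1 = l2 -> is_lim_seq u l2.
Proof. intros h e. subst. auto. Qed.

Definition hn (mu : R) (n : nat) := / ((INR n + 1) * (1 + mu)).

Lemma hn_pos mu n : 0 < mu -> 0 < hn mu n <= 1.
Proof.
  intro hmu. unfold hn. pose proof (pos_INR n).
  split. apply Rinv_0_lt_compat. nra.
  rewrite <- Rinv_1. apply Rinv_le_contravar. lra. nra.
Qed.

Lemma hn_lim mu : 0 < mu -> is_lim_seq (hn mu) 0.
Proof.
  intro hmu.
  assert (H := is_lim_seq_scal_l _ (/ (1 + mu)) _ invN_lim). simpl in H. rewrite Rmult_0_r in H.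
  eapply is_lim_seq_ext; [|exact H]. intro n. unfold hn. rewrite Rinv_mult. ring.
Qed.

Lemma a_succ_eq mu n x : 0 < mu ->
  a_succ mu n x = ln (1 + x * hn mu n) / ln (1 + hn mu n).
Proof.
  intro hmu. unfold a_succ, hn, Rdiv. rewrite Rmult_1_l. reflexivity.
Qed.

Lemma ln1p_pos h : 0 < h -> 0 < ln (1 + h).
Proof. intro. rewrite <- ln_1. apply ln_increasing; lra. Qed.

Lemma a_range mu n x : 0 < mu -> 0 <= x <= 1 -> 0 <= a_succ mu n x <= 1.
Proof.
  intros hmu hx. rewrite a_succ_eq by auto. pose proof (hn_pos mu n hmu).
  set (h := hn mu n) in *. pose proof (ln1p_pos h).
  assert (0 <= ln (1 + x * h)). { rewrite <- ln_1. apply ln_le; nra. }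
  assert (ln (1 + x * h) <= ln (1 + h)) by (apply ln_le; nra).
  split. apply Rdiv_le_0_compat; lra.
  apply (Rmult_le_reg_r (ln (1 + h))). lra. unfold Rdiv. rewrite Rmult_assoc, Rinv_l; lra.
Qed.

Lemma z_lim mu x : 0 < mu -> 0 <= x <= 1 ->
  is_lim_seq (fun n => INR n * (a_succ mu n x - x)) (x * (1 - x) / (2 * (1 + mu))).
Proof.
  intros hmu hx.
  set (num := fun n => ln (1 + x * hn mu n) - x * ln (1 + hn mu n)).
  set (den := fun n => ln (1 + hn mu n)).
  assert (Hnum : is_lim_seq (fun n => num n / (hn mu n)^2) ((x - x^2)/2)).
  { apply (is_lim_seq_le_le (fun n => (x - x^2)/2 - x * hn mu n / 3) _ (fun n => (x - x^2)/2 + x^3 * hn mu n / 3)).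
    - intro n. pose proof (hn_pos mu n hmu). set (h := hn mu n) in *. unfold num. fold h.
      pose proof (ln_lower (x*h)) as l1. pose proof (ln_upper (x*h)) as u1.
      pose proof (ln_lower h) as l2. pose proof (ln_upper h) as u2.
      assert (0 <= x * h) by nra.
      specialize (l1 H0). specialize (u1 H0). specialize (l2 ltac:(lra)). specialize (u2 ltac:(lra)).
      assert (h2 : 0 < h^2) by nra.
      split.
      + apply le_div_r; auto.
        assert (x * ln (1 + h) <= x * (h - h^2/2 + h^3/3)) by (apply Rmult_le_compat_l; lra).
        assert ((x - x^2)/2 * h^2 - x * h / 3 * h^2 = (x*h - (x*h)^2/2) - x * (h - h^2/2 + h^3/3)) by field.
        lra.
      + apply div_le_r; auto.
        assert (x * (h - h^2/2) <= x * ln (1 + h)) by (apply Rmult_le_compat_l; lra).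
        assert (((x - x^2)/2 + x^3 * h / 3) * h^2 = (x*h - (x*h)^2/2 + (x*h)^3/3) - x * (h - h^2/2)) by field.
        lra.
    - apply (lim_eq _ ((x - x^2)/2 - x * 0 / 3)); [|field].
      apply is_lim_seq_minus'. apply is_lim_seq_const.
      apply is_lim_seq_div'. apply is_lim_seq_mult'. apply is_lim_seq_const. apply hn_lim; auto.
      apply is_lim_seq_const. lra.
    - apply (lim_eq _ ((x - x^2)/2 + x^3 * 0 / 3)); [|field].
      apply is_lim_seq_plus'. apply is_lim_seq_const.
      apply is_lim_seq_div'. apply is_lim_seq_mult'. apply is_lim_seq_const. apply hn_lim; auto.
      apply is_lim_seq_const. lra. }
  assert (Hden : is_lim_seq (fun n => den n / hn mu n) 1).
  { apply (is_lim_seq_le_le (fun n => 1 - hn mu n / 2) _ (fun n => 1)).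
    - intro n. pose proof (hn_pos mu n hmu). set (h := hn mu n) in *. unfold den. fold h.
      pose proof (ln_lower h) as l2. pose proof (ln_upper h) as u2.
      specialize (l2 ltac:(lra)). specialize (u2 ltac:(lra)).
      split.
      + apply le_div_r; try lra.
      + apply div_le_r; try lra.
        assert (h^3/3 <= h^2/2).
        { assert (h^3 = h * h^2) by ring. assert (0 <= h^2) by nra.
          assert (h * h^2 <= 1 * h^2) by (apply Rmult_le_compat_r; lra). lra. }
        assert (1 * h = h) by ring. lra.
    - apply (lim_eq _ (1 - 0/2)); [|field]. apply is_lim_seq_minus'. apply is_lim_seq_const.
      apply is_lim_seq_div'. apply hn_lim; auto. apply is_lim_seq_const. lra.
    - apply is_lim_seq_const. }
  assert (Hnh : is_lim_seq (fun n => INR n * hn mu n) (/ (1 + mu))).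
  { assert (H := is_lim_seq_scal_l _ (/ (1 + mu)) _ nN_lim). simpl in H. rewrite Rmult_1_r in H.
    eapply is_lim_seq_ext; [|exact H]. intro n. unfold hn. field. pose proof (pos_INR n). lra. }
  assert (H := is_lim_seq_mult' _ _ _ _ Hnh (is_lim_seq_div' _ _ _ _ Hnum Hden ltac:(lra))).
  apply (lim_eq _ (/ (1 + mu) * ((x - x ^ 2) / 2 / 1))); [|field; lra].
  eapply is_lim_seq_ext; [|exact H]. intro n. simpl.
  rewrite a_succ_eq by auto. pose proof (hn_pos mu n hmu). unfold num, den.
  set (h := hn mu n) in *. pose proof (ln1p_pos h). field. lra.
Qed.

Definition Tn (mu : R) (n : nat) (g : R -> R) (x : R) : R :=
  sum_f_R0 (fun k => pnk n k (a_succ mu n x) * (INR n + 1) *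
                     RInt g (INR k / (INR n + 1)) (INR (S k) / (INR n + 1))) n.

Lemma LK_Tn mu n f x : LK mu n f x = lnmu mu x * Tn mu n (fmu mu f) x.
Proof. reflexivity. Qed.

Lemma Ik_bounds n k : (k <= n)%nat ->
  0 <= INR k / (INR n + 1) /\ INR k / (INR n + 1) < INR (S k) / (INR n + 1) /\
  INR (S k) / (INR n + 1) <= 1 /\ INR (S k) / (INR n + 1) - INR k / (INR n + 1) = / (INR n + 1).
Proof.
  intro hk. pose proof (pos_INR n). pose proof (pos_INR k).
  assert (INR k <= INR n) by (apply le_INR; auto). rewrite S_INR.
  repeat split.
  - apply Rdiv_le_0_compat; lra.
  - apply Rmult_lt_compat_r. apply Rinv_0_lt_compat; lra. lra.
  - apply div_le_r; lra.
  - field. lra.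
Qed.

Lemma Tn_ext mu n g g' x : (forall t, 0 <= t <= 1 -> g t = g' t) -> Tn mu n g x = Tn mu n g' x.
Proof.
  intro he. unfold Tn. apply sum_eq. intros k hk. f_equal. apply RInt_ext.
  destruct (Ik_bounds n k hk) as [h1 [h2 [h3 h4]]].
  rewrite Rmin_left, Rmax_right by lra. intros t ht. apply he. lra.
Qed.

Lemma cont_ex_RInt g a b : (forall t, continuity_pt g t) -> ex_RInt g a b.
Proof.
  intro hc. apply (ex_RInt_continuous (V := R_CompleteNormedModule)). intros z _. apply continuity_pt_filterlim. apply hc.
Qed.

Lemma Tn_minus mu n g g' x : (forall t, continuity_pt g t) -> (forall t, continuity_pt g' t) ->
  Tn mu n (fun t => g t - g' t) x = Tn mu n g x - Tn mu n g' x.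
Proof.
  intros hg hg'. unfold Tn. rewrite <- minus_sum. apply sum_eq. intros k hk.
  assert (RInt (fun t => g t - g' t) (INR k / (INR n + 1)) (INR (S k) / (INR n + 1)) =
          RInt g (INR k / (INR n + 1)) (INR (S k) / (INR n + 1)) - RInt g' (INR k / (INR n + 1)) (INR (S k) / (INR n + 1))).
  { apply (RInt_minus g g'); apply cont_ex_RInt; auto. }
  rewrite H. ring.
Qed.

Lemma Tn_const mu n c x : Tn mu n (fun _ => c) x = c.
Proof.
  unfold Tn. transitivity (c * sum_f_R0 (fun k => pnk n k (a_succ mu n x)) n).
  2:{ rewrite sum_pnk. ring. }
  rewrite scal_sum. apply sum_eq. intros k hk. rewrite RInt_const.
  destruct (Ik_bounds n k hk) as [h1 [h2 [h3 h4]]].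
  change (scal ?a ?b) with (a * b). rewrite h4. field. pose proof (pos_INR n). lra.
Qed.

Lemma Tn_le mu n g g' x : 0 < mu -> 0 <= x <= 1 -> (forall t, continuity_pt g t) -> (forall t, continuity_pt g' t) ->
  (forall t, 0 <= t <= 1 -> g t <= g' t) -> Tn mu n g x <= Tn mu n g' x.
Proof.
  intros hmu hx hg hg' hle. unfold Tn. apply sum_Rle. intros k hk.
  destruct (Ik_bounds n k hk) as [h1 [h2 [h3 h4]]].
  apply Rmult_le_compat_l. apply Rmult_le_pos. apply pnk_nonneg, a_range; auto.
  pose proof (pos_INR n). lra.
  apply RInt_le. lra. apply cont_ex_RInt; auto. apply cont_ex_RInt; auto.
  intros t ht. apply hle. lra.
Qed.

Definition Qf (q0 q1 q2 x0 t : R) := q0 + q1 * (t - x0) + q2 * (t - x0)^2.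

Lemma Qf_cont q0 q1 q2 x0 t : continuity_pt (Qf q0 q1 q2 x0) t.
Proof.
  apply (deriv_cont _ _ (q1 + 2 * q2 * (t - x0))). unfold Qf. auto_derive; auto. ring.
Qed.

Lemma RInt_Q q0 q1 q2 x0 a b : RInt (Qf q0 q1 q2 x0) a b =
  (q0 * b + q1 * (b - x0)^2/2 + q2 * (b - x0)^3/3) - (q0 * a + q1 * (a - x0)^2/2 + q2 * (a - x0)^3/3).
Proof.
  apply is_RInt_unique.
  apply (is_RInt_derive (V := R_CompleteNormedModule) (fun t => q0 * t + q1 * (t - x0)^2/2 + q2 * (t - x0)^3/3)).
  - intros t _. unfold Qf. auto_derive; auto. field.
  - intros t _. apply continuity_pt_filterlim. apply Qf_cont.
Qed.

Lemma Tn_Q mu n q0 q1 q2 x0 x :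
  let N := INR n + 1 in let y := a_succ mu n x in
  Tn mu n (Qf q0 q1 q2 x0) x =
   (q0 + q1*(1/(2*N) - x0) + q2*(1/(3*N^2) - x0/N + x0^2))
   + (q1/N + q2*(1/N^2 - 2*x0/N)) * (INR n * y)
   + (q2/N^2) * (INR n * y + INR n * (INR n - 1) * y^2).
Proof.
  intros N y. unfold Tn. rewrite <- sum_quad. apply sum_eq. intros k hk.
  rewrite RInt_Q. fold N y. rewrite S_INR. unfold N. field. pose proof (pos_INR n). lra.
Qed.

Lemma lim_sq u (l : R) : is_lim_seq u l -> is_lim_seq (fun n => (u n)^2) (l^2).
Proof.
  intro h. apply (lim_eq _ (l * l)); [|ring].
  apply (is_lim_seq_ext (fun n => u n * u n)). intro; simpl; ring.
  apply is_lim_seq_mult'; auto.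
Qed.

Lemma VQ mu x0 q0 q1 q2 : 0 < mu -> 0 <= x0 <= 1 ->
  is_lim_seq (fun n => INR n * (Tn mu n (Qf q0 q1 q2 x0) x0 - Qf q0 q1 q2 x0 x0))
    (Acoef mu x0 * q1 + 2 * Bcoef x0 * q2).
Proof.
  intros hmu hx.
  set (e := x0 * (1 - x0) / (2 * (1 + mu))).
  set (w := fun n => INR n * (a_succ mu n x0 - x0)).
  assert (Hw : is_lim_seq w e) by (apply z_lim; auto).
  set (r := fun n => INR n / (INR n + 1)).
  set (i := fun n => / (INR n + 1)).
  set (G := fun n => q1 * (r n * (2 * w n + 1 - 2 * x0) / 2) +
     q2 * ((r n)^2 * (x0 - x0^2) + r n * i n * (6 * w n + 3 * (w n)^2 - 12 * x0 * w n + 1 - 3 * x0 + 3 * x0^2) / 3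
           - (i n)^2 * (w n)^2)).
  apply (is_lim_seq_ext_loc G).
  - exists 1%nat. intros n hn.
    assert (hn' : 1 <= INR n) by (apply (le_INR 1); auto).
    unfold G, r, i, w. rewrite Tn_Q. unfold Qf.
    set (y := a_succ mu n x0).
    field. lra.
  - assert (Hr : is_lim_seq r 1) by apply nN_lim.
    assert (Hi : is_lim_seq i 0) by apply invN_lim.
    apply (lim_eq _ (q1 * (1 * (2 * e + 1 - 2 * x0) / 2) +
     q2 * (1^2 * (x0 - x0^2) + 1 * 0 * (6 * e + 3 * e^2 - 12 * x0 * e + 1 - 3 * x0 + 3 * x0^2) / 3
           - 0^2 * e^2))).
    2:{ unfold Acoef, Bcoef, e. field. lra. }
    assert (Hw2 : is_lim_seq (fun n => (w n)^2) (e^2)) by (apply lim_sq; auto).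
    assert (Hr2 : is_lim_seq (fun n => (r n)^2) (1^2)) by (apply lim_sq; auto).
    assert (Hi2 : is_lim_seq (fun n => (i n)^2) (0^2)) by (apply lim_sq; auto).
    assert (HR : is_lim_seq (fun n => 6 * w n + 3 * (w n)^2 - 12 * x0 * w n + 1 - 3 * x0 + 3 * x0^2)
                   (6 * e + 3 * e^2 - 12 * x0 * e + 1 - 3 * x0 + 3 * x0^2)).
    { apply is_lim_seq_plus'; [|apply is_lim_seq_const].
      apply is_lim_seq_minus'; [|apply is_lim_seq_const].
      apply is_lim_seq_plus'; [|apply is_lim_seq_const].
      apply is_lim_seq_minus'.
      apply is_lim_seq_plus'; apply is_lim_seq_mult'; auto; apply is_lim_seq_const.
      apply is_lim_seq_mult'; auto; apply is_lim_seq_const. }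
    unfold G.
    apply is_lim_seq_plus'.
    + apply is_lim_seq_mult'. apply is_lim_seq_const.
      apply is_lim_seq_div'; [|apply is_lim_seq_const|lra].
      apply is_lim_seq_mult'; auto.
      apply is_lim_seq_minus'; [|apply is_lim_seq_const].
      apply is_lim_seq_plus'; [|apply is_lim_seq_const].
      apply is_lim_seq_mult'; [apply is_lim_seq_const|auto].
    + apply is_lim_seq_mult'. apply is_lim_seq_const.
      apply is_lim_seq_minus'.
      * apply is_lim_seq_plus'.
        -- apply is_lim_seq_mult'; [auto|apply is_lim_seq_const].
        -- apply is_lim_seq_div'; [|apply is_lim_seq_const|lra].
           apply is_lim_seq_mult'; auto. apply is_lim_seq_mult'; auto.
      * apply is_lim_seq_mult'; auto.
Qed.

Lemma nexp_lim c : 0 < c -> is_lim_seq (fun n => INR n * exp (-(c * INR n))) 0.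
Proof.
  intro hc.
  apply (is_lim_seq_le_le (fun _ => 0) _ (fun n => 8 / c^2 * / (INR n + 1))).
  - intro n. pose proof (pos_INR n). pose proof (exp_pos (-(c * INR n))). split. nra.
    destruct n as [|m]. simpl. rewrite Rmult_0_l. apply Rmult_le_pos. apply Rdiv_le_0_compat; nra.
    left; apply Rinv_0_lt_compat; lra.
    set (n := S m) in *. assert (hn : 1 <= INR n) by (apply (le_INR 1); unfold n; lia).
    pose proof (exp_big (c * INR n)) as hb. specialize (hb ltac:(nra)).
    assert (hp : exp (c * INR n) * exp (-(c * INR n)) = 1) by (rewrite <- exp_plus; replace (c * INR n + - (c * INR n)) with 0 by ring; apply exp_0).
    assert (exp (c * INR n) > 0) by apply exp_pos.
    assert (he : exp (-(c * INR n)) = / exp (c * INR n)) by (field_simplify_eq; lra).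
    rewrite he.
    apply (Rmult_le_reg_r (exp (c * INR n))). auto.
    replace (INR n * / exp (c * INR n) * exp (c * INR n)) with (INR n) by (field; lra).
    assert (8 / c ^ 2 * / (INR n + 1) * ((c * INR n)^2/4) <= 8 / c ^ 2 * / (INR n + 1) * exp (c * INR n)).
    { apply Rmult_le_compat_l; auto. apply Rmult_le_pos. apply Rdiv_le_0_compat; nra. left; apply Rinv_0_lt_compat; lra. }
    assert (8 / c ^ 2 * / (INR n + 1) * ((c * INR n)^2/4) = 2 * INR n * INR n / (INR n + 1)) by (field; split; lra).
    assert (INR n <= 2 * INR n * INR n / (INR n + 1)).
    { apply le_div_r. lra. nra. }
    lra.
  - apply is_lim_seq_const.
  - apply (lim_eq _ (8 / c^2 * 0)); [|ring]. apply is_lim_seq_mult'. apply is_lim_seq_const. apply invN_lim.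
Qed.

Lemma sum_scal_r (f : nat -> R) c n : sum_f_R0 (fun k => f k * c) n = c * sum_f_R0 f n.
Proof. rewrite scal_sum. auto. Qed.

Lemma exp_mono a b : a <= b -> exp a <= exp b.
Proof. intro h. destruct (Rle_lt_or_eq_dec _ _ h) as [h'|h']. left; apply exp_increasing; auto. rewrite h'; lra. Qed.

Lemma chern_up n y s eps : 0 <= y <= 1 -> 0 <= s <= 1/2 ->
  sum_f_R0 (fun k => pnk n k y * exp (s * (INR k - INR n * y - INR n * eps))) n
  <= exp (INR n * (2 * s^2 - s * eps)).
Proof.
  intros hy hs.
  rewrite (sum_eq _ (fun k => pnk n k y * exp s ^ k * exp (- (s * (INR n * y + INR n * eps))))).
  2:{ intros k _. rewrite pow_exp, Rmult_assoc, <- exp_plus. do 2 f_equal. ring. }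
  rewrite sum_scal_r, sum_mgf.
  pose proof (exp_ineq1_le (y * (exp s - 1))) as h1.
  pose proof (exp_ineq1_le s) as h2. pose proof (exp_up s hs) as h3.
  assert (h4 : (y * exp s + (1 - y)) ^ n <= exp (y * (exp s - 1)) ^ n).
  { apply pow_incr. split. pose proof (exp_pos s). nra. lra. }
  rewrite pow_exp in h4.
  assert (h5 : exp (- (s * (INR n * y + INR n * eps))) * (y * exp s + (1 - y)) ^ n <=
               exp (- (s * (INR n * y + INR n * eps))) * exp (y * (exp s - 1) * INR n)).
  { apply Rmult_le_compat_l; auto. left; apply exp_pos. }
  rewrite <- exp_plus in h5. eapply Rle_trans. exact h5.
  apply exp_mono.
  pose proof (pos_INR n).
  assert (y * (exp s - 1 - s) <= 2 * s^2) by nra.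
  assert (INR n * (y * (exp s - 1 - s)) <= INR n * (2 * s^2)) by (apply Rmult_le_compat_l; lra).
  nra.
Qed.

Lemma chern_dn n y s eps : 0 <= y <= 1 -> 0 <= s ->
  sum_f_R0 (fun k => pnk n k y * exp (s * (INR n * y - INR k - INR n * eps))) n
  <= exp (INR n * (2 * s^2 - s * eps)).
Proof.
  intros hy hs.
  rewrite (sum_eq _ (fun k => pnk n k y * exp (-s) ^ k * exp (s * (INR n * y - INR n * eps)))).
  2:{ intros k _. rewrite pow_exp, Rmult_assoc, <- exp_plus. do 2 f_equal. ring. }
  rewrite sum_scal_r, sum_mgf.
  pose proof (exp_ineq1_le (y * (exp (-s) - 1))) as h1.
  pose proof (exp_ineq1_le (-s)) as h2. pose proof (exp_dn s hs) as h3.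
  assert (h4 : (y * exp (-s) + (1 - y)) ^ n <= exp (y * (exp (-s) - 1)) ^ n).
  { apply pow_incr. split. pose proof (exp_pos (-s)). nra. lra. }
  rewrite pow_exp in h4.
  assert (h5 : exp (s * (INR n * y - INR n * eps)) * (y * exp (-s) + (1 - y)) ^ n <=
               exp (s * (INR n * y - INR n * eps)) * exp (y * (exp (-s) - 1) * INR n)).
  { apply Rmult_le_compat_l; auto. left; apply exp_pos. }
  rewrite <- exp_plus in h5. eapply Rle_trans. exact h5.
  apply exp_mono.
  pose proof (pos_INR n).
  assert (y * (exp (-s) - 1 + s) <= 2 * s^2) by nra.
  assert (INR n * (y * (exp (-s) - 1 + s)) <= INR n * (2 * s^2)) by (apply Rmult_le_compat_l; lra).
  nra.
Qed.

Lemma a_lim mu x0 : 0 < mu -> 0 <= x0 <= 1 -> is_lim_seq (fun n => a_succ mu n x0) x0.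
Proof.
  intros hmu hx.
  assert (Hw := z_lim mu x0 hmu hx).
  assert (Hi : is_lim_seq (fun n => / INR n) 0).
  { assert (H := is_lim_seq_inv _ _ is_lim_seq_INR). simpl in H. apply H; discriminate. }
  assert (H := is_lim_seq_plus' _ _ _ _ (is_lim_seq_const x0) (is_lim_seq_mult' _ _ _ _ Hw Hi)).
  rewrite Rmult_0_r, Rplus_0_r in H.
  apply (is_lim_seq_ext_loc (fun n => x0 + INR n * (a_succ mu n x0 - x0) * / INR n)); [|exact H].
  exists 1%nat. intros n hn. assert (1 <= INR n) by (apply (le_INR 1); auto). field. lra.
Qed.

Lemma cont_bound (h : R -> R) : (forall t, continuity_pt h t) ->
  exists M, 0 <= M /\ forall t, 0 <= t <= 1 -> Rabs (h t) <= M.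
Proof.
  intro hc.
  destruct (continuity_ab_maj h 0 1 ltac:(lra) (fun c _ => hc c)) as [xM [hM _]].
  destruct (continuity_ab_min h 0 1 ltac:(lra) (fun c _ => hc c)) as [xm [hm _]].
  exists (Rmax (Rabs (h xM)) (Rabs (h xm))). split.
  - eapply Rle_trans; [apply Rabs_pos| apply Rmax_l].
  - intros t ht. specialize (hM t ht). specialize (hm t ht).
    apply Rabs_le. split.
    + assert (- Rabs (h xm) <= h xm).
      { destruct (Rabs_le_between (h xm) (Rabs (h xm))) as [H1 _]. specialize (H1 (Rle_refl _)). lra. }
      pose proof (Rmax_r (Rabs (h xM)) (Rabs (h xm))). lra.
    + assert (h xM <= Rabs (h xM)) by apply Rle_abs.
      pose proof (Rmax_l (Rabs (h xM)) (Rabs (h xm))). lra.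
Qed.

Lemma RInt_upper (h : R -> R) a b c : a <= b -> (forall t, continuity_pt h t) ->
  (forall t, a < t < b -> h t <= c) -> RInt h a b <= (b - a) * c.
Proof.
  intros hab hc hle.
  assert (RInt h a b <= RInt (fun _ => c) a b).
  { apply RInt_le; auto. apply cont_ex_RInt; auto. apply ex_RInt_const. }
  rewrite RInt_const in H. exact H.
Qed.

Lemma Dk_bound mu n k (h : R -> R) x0 d M : 0 < mu -> 0 < x0 < 1 -> (k <= n)%nat -> (1 <= n)%nat ->
  (forall t, continuity_pt h t) -> 0 < d <= 1 -> 0 <= M ->
  (forall t, 0 <= t <= 1 -> Rabs (h t) <= M) ->
  (forall t, 0 <= t <= 1 -> Rabs (t - x0) < d -> h t <= h x0) ->
  Rabs (a_succ mu n x0 - x0) < d / 4 -> / (INR n + 1) < d / 8 ->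
  (INR n + 1) * RInt h (INR k / (INR n + 1)) (INR (S k) / (INR n + 1)) - h x0 <=
  2 * M * (exp (d/16 * (INR k - INR n * a_succ mu n x0 - INR n * (d/4)))
         + exp (d/16 * (INR n * a_succ mu n x0 - INR k - INR n * (d/4)))).
Proof.
  intros hmu hx hk hn hc hd hM hb hloc hy hN.
  destruct (Ik_bounds n k hk) as [h1 [h2 [h3 h4]]].
  set (y := a_succ mu n x0) in *. set (N := INR n + 1) in *.
  pose proof (a_range mu n x0 hmu ltac:(lra)) as hyr. fold y in hyr.
  pose proof (pos_INR n) as hn0.
  assert (hNp : 0 < N) by (unfold N; lra).
  pose proof (exp_pos (d/16 * (INR k - INR n * y - INR n * (d/4)))) as e1.
  pose proof (exp_pos (d/16 * (INR n * y - INR k - INR n * (d/4)))) as e2.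
  destruct (Rlt_dec (Rabs (INR k - INR n * y)) (INR n * (d/4))) as [hnear|hfar].
  -
    assert (RInt h (INR k / N) (INR (S k) / N) <= (INR (S k) / N - INR k / N) * h x0).
    { apply RInt_upper; auto. lra. intros t ht. apply hloc. lra.
      apply Rabs_lt_between in hnear. apply Rabs_lt_between in hy.
      assert (hu1 : INR k / N - y < d/4 + / N).
      { assert (INR k / N - y = (INR k - INR n * y - y) / N) by (unfold N; field; lra).
        rewrite H.
        assert ((INR k - INR n * y - y) / N <= INR n * (d/4) / N).
        { unfold Rdiv. apply Rmult_le_compat_r. left; apply Rinv_0_lt_compat; lra. lra. }
        assert (INR n * (d/4) / N <= d/4). { apply div_le_r; auto. unfold N. lra. }
        assert (0 < / N) by (apply Rinv_0_lt_compat; lra). lra. }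
      assert (hu2 : -(d/4) - / N < INR k / N - y).
      { assert (INR k / N - y = (INR k - INR n * y - y) / N) by (unfold N; field; lra).
        rewrite H.
        assert (-(d/4) - / N = (-(d/4) * N - 1) / N) by (field; lra). rewrite H0.
        unfold Rdiv. apply Rmult_lt_compat_r. apply Rinv_0_lt_compat; lra.
        unfold N. lra. }
      assert (INR (S k) / N = INR k / N + / N) by lra.
      apply Rabs_lt_between'. lra. }
    rewrite h4 in H.
    assert (N * RInt h (INR k / N) (INR (S k) / N) <= h x0).
    { replace (h x0) with (N * (/ N * h x0)) by (field; lra). apply Rmult_le_compat_l; lra. }
    assert (0 <= 2 * M * (exp (d/16 * (INR k - INR n * y - INR n * (d/4)))
         + exp (d/16 * (INR n * y - INR k - INR n * (d/4))))) by nra.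
    lra.
  -
    assert (RInt h (INR k / N) (INR (S k) / N) <= (INR (S k) / N - INR k / N) * M).
    { apply RInt_upper; auto. lra. intros t ht.
      specialize (hb t ltac:(lra)). apply Rabs_le_between in hb. lra. }
    rewrite h4 in H.
    assert (N * RInt h (INR k / N) (INR (S k) / N) <= M).
    { replace M with (N * (/ N * M)) by (field; lra). apply Rmult_le_compat_l; lra. }
    assert (- h x0 <= M). { specialize (hb x0 ltac:(lra)). apply Rabs_le_between in hb. lra. }
    assert (1 <= exp (d/16 * (INR k - INR n * y - INR n * (d/4))) + exp (d/16 * (INR n * y - INR k - INR n * (d/4)))).
    { apply Rnot_lt_le in hfar.
      destruct (Rle_dec 0 (INR k - INR n * y)) as [hp|hp].
      - rewrite Rabs_right in hfar by lra.
        pose proof (exp_ineq1_le (d/16 * (INR k - INR n * y - INR n * (d/4)))).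
        assert (0 <= d/16 * (INR k - INR n * y - INR n * (d/4))) by (apply Rmult_le_pos; lra). lra.
      - rewrite Rabs_left in hfar by lra.
        pose proof (exp_ineq1_le (d/16 * (INR n * y - INR k - INR n * (d/4)))).
        assert (0 <= d/16 * (INR n * y - INR k - INR n * (d/4))) by (apply Rmult_le_pos; lra). lra. }
    nra.
Qed.

Lemma Tn_sub_eq mu n h x0 :
  Tn mu n h x0 - h x0 = sum_f_R0 (fun k => pnk n k (a_succ mu n x0) *
     ((INR n + 1) * RInt h (INR k / (INR n + 1)) (INR (S k) / (INR n + 1)) - h x0)) n.
Proof.
  unfold Tn. transitivity (sum_f_R0 (fun k => pnk n k (a_succ mu n x0) * (INR n + 1) *
                     RInt h (INR k / (INR n + 1)) (INR (S k) / (INR n + 1))) n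
      - sum_f_R0 (fun k => pnk n k (a_succ mu n x0)) n * h x0).
  rewrite sum_pnk. ring.
  rewrite (Rmult_comm _ (h x0)), scal_sum, <- minus_sum. apply sum_eq. intros. ring.
Qed.

Lemma Tn_tail mu n h x0 d M : 0 < mu -> 0 < x0 < 1 -> (1 <= n)%nat ->
  (forall t, continuity_pt h t) -> 0 < d <= 1 -> 0 <= M ->
  (forall t, 0 <= t <= 1 -> Rabs (h t) <= M) ->
  (forall t, 0 <= t <= 1 -> Rabs (t - x0) < d -> h t <= h x0) ->
  Rabs (a_succ mu n x0 - x0) < d / 4 -> / (INR n + 1) < d / 8 ->
  Tn mu n h x0 - h x0 <= 4 * M * exp (-(d^2/128 * INR n)).
Proof.
  intros hmu hx hn hc hd hM hb hloc hy hN.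
  rewrite Tn_sub_eq.
  set (y := a_succ mu n x0) in *.
  pose proof (a_range mu n x0 hmu ltac:(lra)) as hyr. fold y in hyr.
  eapply Rle_trans.
  { apply sum_Rle. intros k hk. apply Rmult_le_compat_l. apply pnk_nonneg; auto.
    apply (Dk_bound mu n k h x0 d M); auto. }
  fold y.
  rewrite (sum_eq _ (fun k => pnk n k y * exp (d/16 * (INR k - INR n * y - INR n * (d/4))) * (2 * M)
      + pnk n k y * exp (d/16 * (INR n * y - INR k - INR n * (d/4))) * (2 * M))) by (intros; ring).
  rewrite plus_sum, !sum_scal_r.
  pose proof (chern_up n y (d/16) (d/4) hyr ltac:(lra)) as c1.
  pose proof (chern_dn n y (d/16) (d/4) hyr ltac:(lra)) as c2.
  replace (INR n * (2 * (d/16)^2 - d/16 * (d/4))) with (-(d^2/128 * INR n)) in c1, c2 by field.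
  nra.
Qed.

Lemma ML mu g x0 q0 q1 q2 δ : 0 < mu -> 0 < x0 < 1 -> (forall t, continuity_pt g t) ->
  is_lim_seq (fun n => INR n * (Tn mu n g x0 - g x0)) 0 -> 0 < δ ->
  (forall t, 0 <= t <= 1 -> Rabs (t - x0) < δ -> g t - Qf q0 q1 q2 x0 t <= g x0 - Qf q0 q1 q2 x0 x0) ->
  0 <= Acoef mu x0 * q1 + 2 * Bcoef x0 * q2.
Proof.
  intros hmu hx hg hlim hδ hloc.
  set (Q := Qf q0 q1 q2 x0).
  set (h := fun t => g t - Q t).
  assert (hc : forall t, continuity_pt h t).
  { intro t. apply (continuity_pt_minus g Q t (hg t) (Qf_cont q0 q1 q2 x0 t)). }
  destruct (cont_bound h hc) as [M [hM hb]].
  set (d := Rmin δ 1).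
  assert (hd : 0 < d <= 1) by (unfold d; split; [apply Rmin_pos; lra | apply Rmin_r]).
  assert (hloc' : forall t, 0 <= t <= 1 -> Rabs (t - x0) < d -> h t <= h x0).
  { intros t ht htx. unfold h. apply hloc; auto. pose proof (Rmin_l δ 1). fold d in H. lra. }
  pose proof (a_lim mu x0 hmu ltac:(lra)) as Ha. apply is_lim_seq_Reals in Ha.
  destruct (Ha (d/4) ltac:(lra)) as [N1 HN1].
  pose proof invN_lim as Hi. apply is_lim_seq_Reals in Hi.
  destruct (Hi (d/8) ltac:(lra)) as [N2 HN2].
  assert (Hev : eventually (fun n => INR n * (Tn mu n h x0 - h x0) <= 4 * M * (INR n * exp (-(d^2/128 * INR n))))).
  { exists (Nat.max N1 (Nat.max N2 1)). intros n hn.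
    assert (Tn mu n h x0 - h x0 <= 4 * M * exp (-(d^2/128 * INR n))).
    { apply (Tn_tail mu n h x0 d M); auto. lia.
      apply HN1. lia.
      specialize (HN2 n ltac:(lia)). unfold R_dist in HN2. rewrite Rminus_0_r in HN2.
      rewrite Rabs_right in HN2; auto. left; apply Rinv_0_lt_compat. pose proof (pos_INR n); lra. }
    pose proof (pos_INR n). nra. }
  assert (HL : is_lim_seq (fun n => INR n * (Tn mu n h x0 - h x0)) (0 - (Acoef mu x0 * q1 + 2 * Bcoef x0 * q2))).
  { apply (is_lim_seq_ext (fun n => INR n * (Tn mu n g x0 - g x0) - INR n * (Tn mu n Q x0 - Q x0))).
    - intro n. unfold h. rewrite Tn_minus; auto. ring. apply Qf_cont.
    - apply is_lim_seq_minus'; auto. apply VQ; auto. lra. }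
  assert (HR : is_lim_seq (fun n => 4 * M * (INR n * exp (-(d^2/128 * INR n)))) (4 * M * 0)).
  { apply is_lim_seq_mult'. apply is_lim_seq_const. apply nexp_lim. nra. }
  pose proof (is_lim_seq_le_loc _ _ _ _ Hev HL HR) as Hle. simpl in Hle. lra.
Qed.

Lemma locally_interval x a b (P : R -> Prop) : a < x < b -> (forall t, a < t < b -> P t) -> locally x P.
Proof.
  intros hx hP.
  assert (he : 0 < Rmin (x - a) (b - x)) by (apply Rmin_pos; lra).
  exists (mkposreal _ he). intros t ht. apply hP.
  change (Rabs (t - x) < Rmin (x - a) (b - x)) in ht.
  apply Rabs_lt_between' in ht. pose proof (Rmin_l (x - a) (b - x)). pose proof (Rmin_r (x - a) (b - x)). lra.
Qed.

Definition sfun (mu x : R) := exp (- (x / (1 + mu))) / (x * (1 - x)).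
Definition dsfun (mu x : R) := exp (- (x / (1 + mu))) *
   (- (/ (1 + mu)) / (x * (1 - x)) - (1 - 2 * x) / (x * (1 - x))^2).

Lemma sfun_deriv mu x : 0 < mu -> 0 < x < 1 -> is_derive (sfun mu) x (dsfun mu x).
Proof.
  intros hmu hx. unfold sfun, dsfun. auto_derive.
  - repeat split; try lra; apply Rmult_integral_contrapositive; split; lra.
  - unfold Rdiv. field. split; lra.
Qed.

Lemma sfun_ode mu x : 0 < mu -> 0 < x < 1 -> Acoef mu x * sfun mu x + Bcoef x * dsfun mu x = 0.
Proof.
  intros hmu hx. unfold Acoef, Bcoef, sfun, dsfun. field. split; lra.
Qed.

Lemma sfun_pos mu x : 0 < x < 1 -> 0 < sfun mu x.
Proof. intro hx. unfold sfun. apply Rdiv_lt_0_compat. apply exp_pos. nra. Qed.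

Lemma sfun_cont mu x : 0 < mu -> 0 < x < 1 -> continuity_pt (sfun mu) x.
Proof. intros. apply (deriv_cont _ _ (dsfun mu x)). apply sfun_deriv; auto. Qed.

Lemma sfun_ex_RInt mu a b : 0 < mu -> 0 < a < 1 -> 0 < b < 1 -> ex_RInt (sfun mu) a b.
Proof.
  intros hmu ha hb. apply (ex_RInt_continuous (V := R_CompleteNormedModule)). intros z hz.
  apply continuity_pt_filterlim. apply sfun_cont; auto.
  split. eapply Rlt_le_trans; [|apply hz]. apply Rmin_case; lra.
  eapply Rle_lt_trans; [apply hz|]. apply Rmax_case; lra.
Qed.

Definition Sfun (mu x : R) := RInt (sfun mu) (1/2) x.

Lemma Sfun_deriv mu x : 0 < mu -> 0 < x < 1 -> is_derive (Sfun mu) x (sfun mu x).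
Proof.
  intros hmu hx. unfold Sfun.
  apply (is_derive_RInt (V := R_CompleteNormedModule) (sfun mu) (RInt (sfun mu) (1/2)) (1/2)).
  - apply (locally_interval x 0 1); auto. intros t ht.
    apply (RInt_correct (V := R_CompleteNormedModule)). apply sfun_ex_RInt; auto; lra.
  - apply continuity_pt_filterlim. apply sfun_cont; auto.
Qed.

Lemma Sfun_cont mu x : 0 < mu -> 0 < x < 1 -> continuity_pt (Sfun mu) x.
Proof. intros. apply (deriv_cont _ _ (sfun mu x)). apply Sfun_deriv; auto. Qed.

Lemma Sfun_incr mu a b : 0 < mu -> 0 < a -> a < b -> b < 1 -> Sfun mu a < Sfun mu b.
Proof.
  intros hmu ha hab hb.
  destruct (MVT_gen (Sfun mu) a b (sfun mu)) as [c [hc he]].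
  - intros x hx. rewrite Rmin_left, Rmax_right in hx by lra. apply Sfun_deriv; auto; lra.
  - intros x hx. rewrite Rmin_left, Rmax_right in hx by lra. apply Sfun_cont; auto; lra.
  - rewrite Rmin_left, Rmax_right in hc by lra.
    pose proof (sfun_pos mu c ltac:(lra)). nra.
Qed.

Lemma TP (phi phi1 : R -> R) x0 phi2 r eta : 0 < r -> 0 < eta ->
  (forall t, Rabs (t - x0) < r -> is_derive phi t (phi1 t)) -> is_derive phi1 x0 phi2 ->
  exists d, 0 < d /\ forall t, Rabs (t - x0) < d ->
    phi t <= phi x0 + phi1 x0 * (t - x0) + (phi2 / 2 + eta) * (t - x0)^2.
Proof.
  intros hr heta hd1 hd2.
  apply is_derive_Reals in hd2. destruct (hd2 eta heta) as [d1 hd1'].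
  exists (Rmin d1 r). split. apply Rmin_pos; [apply cond_pos| lra].
  intros t ht.
  pose proof (Rmin_l d1 r). pose proof (Rmin_r d1 r).
  set (P := fun tau => phi x0 + phi1 x0 * (tau - x0) + (phi2 / 2 + eta) * (tau - x0)^2).
  set (g := fun tau => phi tau - P tau).
  set (dg := fun tau => phi1 tau - (phi1 x0 + (phi2 + 2 * eta) * (tau - x0))).
  assert (hg : forall tau, Rabs (tau - x0) < r -> is_derive g tau (dg tau)).
  { intros tau htau.
    assert (HP : is_derive P tau (phi1 x0 + (phi2 + 2 * eta) * (tau - x0))).
    { unfold P. auto_derive; auto. field. }
    apply (is_derive_minus phi P tau _ _ (hd1 tau htau) HP). }
  assert (hin : forall c, Rmin x0 t <= c <= Rmax x0 t -> Rabs (c - x0) <= Rabs (t - x0)).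
  { intros c hc. unfold Rmin, Rmax in hc. destruct (Rle_dec x0 t).
    - rewrite !Rabs_right; lra.
    - rewrite !Rabs_left1; lra. }
  destruct (MVT_gen g x0 t dg) as [c [hc he]].
  - intros x hx. apply hg. assert (Rabs (x - x0) <= Rabs (t - x0)) by (apply hin; lra). lra.
  - intros x hx. apply (deriv_cont g x (dg x)). apply hg. assert (Rabs (x - x0) <= Rabs (t - x0)) by (apply hin; lra). lra.
  - assert (hg0 : g x0 = 0) by (unfold g, P; ring).
    assert (hdc : dg c * (t - x0) <= 0).
    { destruct (Req_dec c x0) as [e|e].
      - subst c. unfold dg. replace (x0 - x0) with 0 by ring. lra.
      - assert (hcl : Rabs (c - x0) < d1) by (pose proof (hin c hc); lra).
        specialize (hd1' (c - x0) ltac:(lra) hcl). replace (x0 + (c - x0)) with c in hd1' by ring.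
        apply Rabs_lt_between in hd1'.
        assert (hs : 0 <= (c - x0) * (t - x0)).
        { unfold Rmin, Rmax in hc. destruct (Rle_dec x0 t); nra. }
        assert (hq : (phi1 c - phi1 x0) = ((phi1 c - phi1 x0) / (c - x0)) * (c - x0)) by (field; lra).
        unfold dg.
        set (th := (phi1 c - phi1 x0) / (c - x0)) in *.
        replace ((phi1 c - (phi1 x0 + (phi2 + 2 * eta) * (c - x0))) * (t - x0)) with
           ((th - phi2 - 2 * eta) * ((c - x0) * (t - x0))) by (unfold th; field; lra).
        assert (th - phi2 - 2 * eta < 0) by lra. nra. }
    assert (hfin : g t <= 0) by lra. unfold g, P in hfin. lra.
Qed.

Lemma phi_deriv mu c1 c2 e K t : 0 < mu -> 0 < t < 1 ->
  is_derive (fun t => c1 + c2 * Sfun mu t - e * exp (K * t)) t (c2 * sfun mu t - e * K * exp (K * t)).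
Proof.
  intros hmu ht. pose proof (Sfun_deriv mu t hmu ht) as hS.
  auto_derive. exists (sfun mu t); auto.
  replace (Derive (fun x => Sfun mu x) t) with (sfun mu t) by (symmetry; apply is_derive_unique; exact hS). ring.
Qed.

Lemma phi1_deriv mu c2 e K t : 0 < mu -> 0 < t < 1 ->
  is_derive (fun t => c2 * sfun mu t - e * K * exp (K * t)) t (c2 * dsfun mu t - e * K * K * exp (K * t)).
Proof.
  intros hmu ht. pose proof (sfun_deriv mu t hmu ht) as hS.
  auto_derive. exists (dsfun mu t); auto.
  replace (Derive (fun x => sfun mu x) t) with (dsfun mu t) by (symmetry; apply is_derive_unique; exact hS). ring.
Qed.

Lemma CMP mu (u : R -> R) a b c1 c2 :
  0 < mu -> 0 < a -> a < b -> b < 1 -> (forall t, continuity_pt u t) ->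
  (forall x0 q0 q1 q2 d, a < x0 < b -> 0 < d ->
     (forall t, 0 <= t <= 1 -> Rabs (t - x0) < d -> u t - Qf q0 q1 q2 x0 t <= u x0 - Qf q0 q1 q2 x0 x0) ->
     0 <= Acoef mu x0 * q1 + 2 * Bcoef x0 * q2) ->
  u a <= c1 + c2 * Sfun mu a -> u b <= c1 + c2 * Sfun mu b ->
  forall x, a <= x <= b -> u x <= c1 + c2 * Sfun mu x.
Proof.
  intros hmu ha hab hb hu hML hua hub x hx.
  destruct (Rle_dec (u x) (c1 + c2 * Sfun mu x)) as [ok|bad]; auto. exfalso.
  apply Rnot_le_lt in bad.
  set (dd := u x - (c1 + c2 * Sfun mu x)).
  assert (hdd : 0 < dd) by (unfold dd; lra).
  set (K := 2 / (a * (1 - b))).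
  assert (hK : 0 < K) by (unfold K; apply Rdiv_lt_0_compat; nra).
  set (e := dd / (2 * exp K)).
  assert (he : 0 < e) by (unfold e; apply Rdiv_lt_0_compat; [lra| pose proof (exp_pos K); lra]).
  assert (heK : forall t, t <= 1 -> e * exp (K * t) <= dd / 2).
  { intros t ht. assert (exp (K * t) <= exp K) by (apply exp_mono; nra).
    unfold e. apply (Rle_trans _ (dd / (2 * exp K) * exp K)).
    apply Rmult_le_compat_l; [left; auto| auto]. right. field. pose proof (exp_pos K); lra. }
  set (phi := fun t => c1 + c2 * Sfun mu t - e * exp (K * t)).
  set (phi1 := fun t => c2 * sfun mu t - e * K * exp (K * t)).
  set (H := fun t => u t - phi t).
  assert (hHc : forall t, a <= t <= b -> continuity_pt H t).
  { intros t ht. apply continuity_pt_minus. auto.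
    apply (deriv_cont _ _ (phi1 t)). apply phi_deriv; auto; lra. }
  destruct (continuity_ab_maj H a b ltac:(lra) hHc) as [x0 [hmax hx0]].
  pose proof (hmax x hx) as hHx.
  assert (hHx' : dd < H x).
  { unfold H, phi. pose proof (exp_pos (K * x)). unfold dd. nra. }
  assert (hHa : H a <= dd / 2).
  { unfold H, phi. pose proof (heK a ltac:(lra)). lra. }
  assert (hHb : H b <= dd / 2).
  { unfold H, phi. pose proof (heK b ltac:(lra)). lra. }
  assert (hx0' : a < x0 < b).
  { split; destruct (Req_dec x0 a); destruct (Req_dec x0 b); subst; try lra. }
  set (r := Rmin (x0 - a) (b - x0)).
  assert (hr : 0 < r) by (unfold r; apply Rmin_pos; lra).
  set (A0 := Acoef mu x0). set (B0 := Bcoef x0). set (psi0 := exp (K * x0)).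
  assert (hB0 : a * (1 - b) / 2 <= B0).
  { unfold B0, Bcoef. assert (a * (1 - b) <= x0 * (1 - x0)) by nra. lra. }
  assert (hA0 : -(1/2) <= A0).
  { unfold A0, Acoef. assert (0 <= (x0 - x0^2) / (2 * (1 + mu))) by (apply Rdiv_le_0_compat; nra). lra. }
  assert (hKB : 1 <= K * B0).
  { unfold K. apply (Rle_trans _ (2 / (a * (1 - b)) * (a * (1 - b) / 2))).
    right. field. repeat split; lra. apply Rmult_le_compat_l. left; apply Rdiv_lt_0_compat; nra. lra. }
  assert (hpsi : 0 < psi0) by apply exp_pos.
  assert (hB0p : 0 < B0) by nra.
  set (eta := e * K * psi0 * (A0 + K * B0) / (4 * B0)).
  assert (heta : 0 < eta).
  { unfold eta. apply Rdiv_lt_0_compat; [|lra]. assert (0 < A0 + K * B0) by lra. apply Rmult_lt_0_compat; [apply Rmult_lt_0_compat; [apply Rmult_lt_0_compat|]|]; auto. }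
  set (phi2 := c2 * dsfun mu x0 - e * K * K * psi0).
  destruct (TP phi phi1 x0 phi2 r eta hr heta) as [d0 [hd0 hT]].
  - intros t ht. apply phi_deriv; auto.
    apply Rabs_lt_between' in ht. assert (r <= x0 - a) by apply Rmin_l. assert (r <= b - x0) by apply Rmin_r. lra.
  - apply phi1_deriv; auto. lra.
  - pose proof (hML x0 (phi x0) (phi1 x0) (phi2 / 2 + eta) (Rmin d0 r) hx0' ltac:(apply Rmin_pos; lra)) as hres.
    assert (hres' : 0 <= A0 * phi1 x0 + 2 * B0 * (phi2 / 2 + eta)).
    { apply hres. intros t ht htx.
      pose proof (Rmin_l d0 r). pose proof (Rmin_r d0 r).
      assert (r <= x0 - a) by apply Rmin_l. assert (r <= b - x0) by apply Rmin_r.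
      specialize (hT t ltac:(lra)).
      apply Rabs_lt_between' in htx.
      specialize (hmax t ltac:(lra)). unfold H in hmax.
      unfold Qf. replace (x0 - x0) with 0 by ring. lra. }
    unfold phi1, phi2 in hres'. fold psi0 in hres'.
    pose proof (sfun_ode mu x0 hmu ltac:(lra)) as hode. fold A0 B0 in hode.
    assert (hneg : A0 * (c2 * sfun mu x0 - e * K * psi0) + 2 * B0 * ((c2 * dsfun mu x0 - e * K * K * psi0) / 2 + eta)
                   = - (e * K * psi0 * (A0 + K * B0)) / 2).
    { transitivity (c2 * (A0 * sfun mu x0 + B0 * dsfun mu x0) - (e * K * psi0 * (A0 + K * B0)) / 2).
      unfold eta. field. lra. rewrite hode. field. }
    rewrite hneg in hres'.
    assert (0 < A0 + K * B0) by lra. assert (0 < e * K * psi0 * (A0 + K * B0)) by (apply Rmult_lt_0_compat; [apply Rmult_lt_0_compat; [apply Rmult_lt_0_compat|]|]; auto).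
    lra.
Qed.

Definition cl (t : R) := Rmax 0 (Rmin 1 t).

Lemma cl_id t : 0 <= t <= 1 -> cl t = t.
Proof. intro h. unfold cl. rewrite Rmin_right by lra. rewrite Rmax_right by lra. auto. Qed.

Lemma cl_range t : 0 <= cl t <= 1.
Proof. unfold cl. unfold Rmax, Rmin. repeat destruct Rle_dec; lra. Qed.

Lemma cl_lip s t : Rabs (cl s - cl t) <= Rabs (s - t).
Proof.
  unfold cl, Rmax, Rmin. repeat destruct Rle_dec; unfold Rabs; repeat destruct Rcase_abs; lra.
Qed.

Lemma cl_cont t : continuity_pt cl t.
Proof.
  apply continuity_pt_filterlim. intros P [eps HP]. exists eps. intros z hz. apply HP.
  change (Rabs (z - t) < eps) in hz. change (Rabs (cl z - cl t) < eps).
  pose proof (cl_lip z t). lra.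
Qed.

Lemma fcl_cont (f : R -> R) :
  (forall x, 0 <= x <= 1 -> filterlim f (within (fun y => 0 <= y <= 1) (locally x)) (locally (f x))) ->
  forall t, continuity_pt (fun t => f (cl t)) t.
Proof.
  intros hf t. apply continuity_pt_filterlim.
  apply (filterlim_comp _ _ _ cl f _ (within (fun y => 0 <= y <= 1) (locally (cl t)))).
  - intros P [eps HP]. exists eps. intros z hz. apply HP.
    change (Rabs (z - t) < eps) in hz. change (Rabs (cl z - cl t) < eps).
    pose proof (cl_lip z t). lra. apply cl_range.
  - apply hf. apply cl_range.
Qed.

Lemma lnmu_pos mu t : 0 < mu -> 0 <= t -> 0 < lnmu mu t.
Proof. intros. unfold lnmu. replace (1 + mu + t) with (1 + (mu + t)) by ring. apply ln1p_pos. lra. Qed.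

Lemma lnmu_cont mu t : 0 < mu -> 0 <= t -> continuity_pt (lnmu mu) t.
Proof.
  intros. apply (deriv_cont _ _ (/ (1 + mu + t))). unfold lnmu. auto_derive. lra. field. lra.
Qed.

Definition Uf mu f t := fmu mu f (cl t).

Lemma Uf_cont mu (f : R -> R) : 0 < mu ->
  (forall x, 0 <= x <= 1 -> filterlim f (within (fun y => 0 <= y <= 1) (locally x)) (locally (f x))) ->
  forall t, continuity_pt (Uf mu f) t.
Proof.
  intros hmu hf t. unfold Uf, fmu.
  apply (continuity_pt_div (fun t => f (cl t)) (fun t => lnmu mu (cl t))).
  - apply fcl_cont; auto.
  - apply (continuity_pt_comp cl (lnmu mu)). apply cl_cont. apply lnmu_cont; auto. apply cl_range.
  - apply Rgt_not_eq. apply lnmu_pos; auto. apply cl_range.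
Qed.

Lemma Uf_eq mu f t : 0 <= t <= 1 -> Uf mu f t = fmu mu f t.
Proof. intro. unfold Uf. rewrite cl_id; auto. Qed.

Lemma Tn_ext_open mu n g g' x : (forall t, 0 < t < 1 -> g t = g' t) -> Tn mu n g x = Tn mu n g' x.
Proof.
  intro he. unfold Tn. apply sum_eq. intros k hk. f_equal. apply RInt_ext.
  destruct (Ik_bounds n k hk) as [h1 [h2 [h3 h4]]].
  rewrite Rmin_left, Rmax_right by lra. intros t ht. apply he. lra.
Qed.

Lemma neg_lim mu g x0 : (forall t, continuity_pt g t) ->
  is_lim_seq (fun n => INR n * (Tn mu n g x0 - g x0)) 0 ->
  is_lim_seq (fun n => INR n * (Tn mu n (fun t => 0 - g t) x0 - (0 - g x0))) 0.
Proof.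
  intros hc hl.
  apply (is_lim_seq_ext (fun n => -1 * (INR n * (Tn mu n g x0 - g x0)))).
  - intro n. rewrite (Tn_minus mu n (fun _ => 0) g x0), Tn_const; auto. ring.
    intro; apply continuity_pt_const; intros a b; auto.
  - apply (lim_eq _ (-1 * 0)); [|ring]. apply is_lim_seq_mult'; auto. apply is_lim_seq_const.
Qed.

Lemma REP mu g a b : 0 < mu -> 0 < a -> a < b -> b < 1 -> (forall t, continuity_pt g t) ->
  (forall x0, 0 < x0 < 1 -> is_lim_seq (fun n => INR n * (Tn mu n g x0 - g x0)) 0) ->
  exists c1 c2, forall x, a <= x <= b -> g x = c1 + c2 * Sfun mu x.
Proof.
  intros hmu ha hab hb hc hl.
  pose proof (Sfun_incr mu a b hmu ha hab hb) as hS.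
  set (c2 := (g b - g a) / (Sfun mu b - Sfun mu a)).
  set (c1 := g a - c2 * Sfun mu a).
  exists c1, c2. intros x hx.
  assert (hga : g a = c1 + c2 * Sfun mu a) by (unfold c1; ring).
  assert (hgb : g b = c1 + c2 * Sfun mu b) by (unfold c1, c2; field; lra).
  assert (hng : forall t, continuity_pt (fun t => 0 - g t) t).
  { intro t. apply (continuity_pt_minus (fun _ => 0) g). apply continuity_pt_const; intros u v; auto. auto. }
  apply Rle_antisym.
  - apply (CMP mu g a b c1 c2); auto; try lra.
    intros x0 q0 q1 q2 d hx0 hd hloc. apply (ML mu g x0 q0 q1 q2 d); auto; try lra. apply hl; lra.
  - assert (0 - g x <= - c1 + - c2 * Sfun mu x); [|lra].
    apply (CMP mu (fun t => 0 - g t) a b (- c1) (- c2)); auto; try lra.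
    intros x0 q0 q1 q2 d hx0 hd hloc. apply (ML mu (fun t => 0 - g t) x0 q0 q1 q2 d); auto; try lra.
    apply neg_lim; auto. apply hl; lra.
Qed.

Lemma GLOB mu g : 0 < mu -> (forall t, continuity_pt g t) ->
  (forall x0, 0 < x0 < 1 -> is_lim_seq (fun n => INR n * (Tn mu n g x0 - g x0)) 0) ->
  exists c1 c2, forall x, 0 < x < 1 -> g x = c1 + c2 * Sfun mu x.
Proof.
  intros hmu hc hl.
  destruct (REP mu g (1/4) (3/4) hmu ltac:(lra) ltac:(lra) ltac:(lra) hc hl) as [c1 [c2 H]].
  exists c1, c2. intros x hx.
  assert (h1 : 0 < Rmin x (1/4)) by (apply Rmin_pos; lra).
  assert (h2 : Rmax x (3/4) < 1) by (apply Rmax_lub_lt; lra).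
  pose proof (Rmin_l x (1/4)). pose proof (Rmin_r x (1/4)).
  pose proof (Rmax_l x (3/4)). pose proof (Rmax_r x (3/4)).
  destruct (REP mu g (Rmin x (1/4)) (Rmax x (3/4)) hmu h1 ltac:(lra) h2 hc hl) as [c1' [c2' H']].
  pose proof (H (1/4) ltac:(lra)). pose proof (H (3/4) ltac:(lra)).
  pose proof (H' (1/4) ltac:(lra)). pose proof (H' (3/4) ltac:(lra)).
  pose proof (Sfun_incr mu (1/4) (3/4) hmu ltac:(lra) ltac:(lra) ltac:(lra)).
  assert (hc2 : (c2 - c2') * (Sfun mu (3/4) - Sfun mu (1/4)) = 0) by lra.
  apply Rmult_integral in hc2. destruct hc2 as [hc2|hc2]; [|lra].
  assert (c2 = c2') by lra. subst c2'. assert (c1 = c1') by lra. subst c1'.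
  apply H'. lra.
Qed.

Lemma S_bound mu t : 0 < mu -> 0 < t <= 1/2 -> Sfun mu t <= - (exp (-1) * (ln (1/2) - ln t)).
Proof.
  intros hmu ht.
  assert (hex : ex_RInt (sfun mu) t (1/2)) by (apply sfun_ex_RInt; auto; lra).
  assert (hS : Sfun mu t = - RInt (sfun mu) t (1/2)).
  { unfold Sfun. rewrite <- (opp_RInt_swap (V := R_CompleteNormedModule)); auto. }
  assert (hI : is_RInt (fun r => exp (-1) * / r) t (1/2) (exp (-1) * ln (1/2) - exp (-1) * ln t)).
  { apply (is_RInt_derive (V := R_CompleteNormedModule) (fun r => exp (-1) * ln r)).
    - intros x hx. rewrite Rmin_left, Rmax_right in hx by lra. auto_derive. lra. field. lra.
    - intros x hx. rewrite Rmin_left, Rmax_right in hx by lra.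
      apply continuity_pt_filterlim. apply (deriv_cont _ _ (exp (-1) * (- / x^2))). auto_derive. lra. field. lra. }
  destruct (Req_dec t (1/2)) as [e|e].
  { subst t. rewrite hS, RInt_point. replace (ln (1/2) - ln (1/2)) with 0 by ring. change (zero : R) with 0. lra. }
  assert (RInt (fun r => exp (-1) * / r) t (1/2) <= RInt (sfun mu) t (1/2)).
  { apply RInt_le; auto. lra. eexists; exact hI.
    intros r hr. unfold sfun.
    assert (exp (-1) <= exp (- (r / (1 + mu)))).
    { apply exp_mono. assert (r / (1 + mu) <= 1). apply div_le_r; lra. lra. }
    assert (exp (- (r / (1 + mu))) <= exp (- (r / (1 + mu))) / (1 - r)).
    { apply le_div_r. lra. pose proof (exp_pos (- (r / (1 + mu)))). nra. }
    replace (exp (- (r / (1 + mu))) / (r * (1 - r))) with (exp (- (r / (1 + mu))) / (1 - r) / r) by (field; lra).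
    unfold Rdiv. apply Rmult_le_compat_r. left; apply Rinv_0_lt_compat; lra. unfold Rdiv in H0. lra. }
  rewrite (is_RInt_unique _ _ _ _ hI) in H. lra.
Qed.

Lemma C2Z mu g c1 c2 M : 0 < mu -> (forall t, 0 < t < 1 -> Rabs (g t) <= M) ->
  (forall t, 0 < t < 1 -> g t = c1 + c2 * Sfun mu t) -> c2 = 0.
Proof.
  intros hmu hb hr.
  destruct (Req_dec c2 0) as [e|e]; auto. exfalso.
  assert (hc2 : 0 < Rabs c2) by (apply Rabs_pos_lt; auto).
  set (L := (Rabs M + Rabs c1 + 1) * exp 1 / Rabs c2).
  assert (hL : 0 < L).
  { unfold L. apply Rdiv_lt_0_compat; auto. apply Rmult_lt_0_compat. pose proof (Rabs_pos M). pose proof (Rabs_pos c1). lra. apply exp_pos. }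
  set (t := /2 * exp (- L)).
  assert (hel : exp (- L) < 1) by (rewrite <- exp_0; apply exp_increasing; lra).
  assert (ht : 0 < t < 1/2) by (unfold t; pose proof (exp_pos (-L)); lra).
  assert (hlnt : ln t = ln (1/2) - L).
  { unfold t. rewrite ln_mult, ln_exp. replace (/2) with (1/2) by field. ring. lra. apply exp_pos. }
  pose proof (S_bound mu t hmu ltac:(lra)) as hS. rewrite hlnt in hS.
  replace (ln (1/2) - (ln (1/2) - L)) with L in hS by ring.
  pose proof (hb t ltac:(lra)) as hgt. rewrite (hr t ltac:(lra)) in hgt.
  assert (hSabs : exp (-1) * L <= Rabs (Sfun mu t)).
  { rewrite Rabs_left1. lra. pose proof (exp_pos (-1)). nra. }
  assert (hprod : Rabs c2 * (exp (-1) * L) <= Rabs (c2 * Sfun mu t)).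
  { rewrite Rabs_mult. apply Rmult_le_compat_l; auto. apply Rabs_pos. }
  assert (Rabs c2 * (exp (-1) * L) = Rabs M + Rabs c1 + 1).
  { unfold L. pose proof (exp_pos 1). replace (exp (-1)) with (/ exp 1). field. split; lra.
    rewrite <- exp_Ropp. auto. }
  assert (Rabs (c2 * Sfun mu t) <= Rabs (c1 + c2 * Sfun mu t) + Rabs c1).
  { pose proof (Rabs_triang (c1 + c2 * Sfun mu t) (- c1)) as htr. rewrite Rabs_Ropp in htr.
    replace (c1 + c2 * Sfun mu t + - c1) with (c2 * Sfun mu t) in htr by ring. lra. }
  pose proof (Rle_abs M). lra.
Qed.

Lemma ZD (F : R -> R) a b : (forall x, a < x < b -> is_derive F x 0) ->
  forall x y, a < x < b -> a < y < b -> F x = F y.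
Proof.
  intros hd x y hx hy.
  destruct (MVT_gen F x y (fun _ => 0)) as [c [hc he]].
  - intros z hz. apply hd. split.
    eapply Rlt_le_trans; [|apply Rlt_le, hz]. apply Rmin_case; lra.
    eapply Rle_lt_trans; [apply Rlt_le, hz|]. apply Rmax_case; lra.
  - intros z hz. apply (deriv_cont F z 0). apply hd. split.
    eapply Rlt_le_trans; [|apply hz]. apply Rmin_case; lra.
    eapply Rle_lt_trans; [apply hz|]. apply Rmax_case; lra.
  - lra.
Qed.

Lemma BW mu f (d1 d2 : R -> R) : 0 < mu ->
  (forall x, 0 < x < 1 ->
       is_derive (fmu mu f) x (d1 x) /\ is_derive d1 x (d2 x) /\
       Acoef mu x * d1 x + Bcoef x * d2 x = 0) ->
  exists c1 c2, forall x, 0 < x < 1 -> fmu mu f x = c1 + c2 * Sfun mu x.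
Proof.
  intros hmu H.
  assert (hW : forall x, 0 < x < 1 -> is_derive (fun t => d1 t / sfun mu t) x 0).
  { intros x hx. destruct (H x hx) as [_ [hd2 hode]].
    pose proof (sfun_deriv mu x hmu hx) as hs. pose proof (sfun_pos mu x hx) as hsp.
    pose proof (sfun_ode mu x hmu hx) as hso.
    auto_derive.
    - repeat split. exists (d2 x); auto. exists (dsfun mu x); auto. lra.
    - replace (Derive (fun x => d1 x) x) with (d2 x) by (symmetry; apply is_derive_unique; exact hd2).
      replace (Derive (fun x => sfun mu x) x) with (dsfun mu x) by (symmetry; apply is_derive_unique; exact hs).
      assert (hB : 0 < Bcoef x) by (unfold Bcoef; nra).
      assert (e1 : d2 x = - (Acoef mu x * d1 x) / Bcoef x) by (field_simplify_eq; lra).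
      assert (e2 : dsfun mu x = - (Acoef mu x * sfun mu x) / Bcoef x) by (field_simplify_eq; lra).
      rewrite e1, e2. field. lra. }
  set (C := d1 (1/2) / sfun mu (1/2)).
  assert (hd1 : forall x, 0 < x < 1 -> d1 x = C * sfun mu x).
  { intros x hx. pose proof (ZD _ 0 1 hW x (1/2) hx ltac:(lra)) as e. cbv beta in e. fold C in e.
    pose proof (sfun_pos mu x hx). rewrite <- e. field. lra. }
  assert (hF : forall x, 0 < x < 1 -> is_derive (fun t => fmu mu f t - C * Sfun mu t) x 0).
  { intros x hx. destruct (H x hx) as [hd _].
    pose proof (Sfun_deriv mu x hmu hx) as hS.
    assert (h := is_derive_minus _ _ x _ _ hd (is_derive_scal _ x C _ hS)).
    replace 0 with (minus (d1 x) (scal C (sfun mu x))). exact h.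
    change (minus (d1 x) (scal C (sfun mu x))) with (d1 x - C * sfun mu x).
    rewrite hd1 by auto. apply Rminus_diag_eq. reflexivity. }
  exists (fmu mu f (1/2) - C * Sfun mu (1/2)), C. intros x hx.
  pose proof (ZD _ 0 1 hF x (1/2) hx ltac:(lra)) as e. cbv beta in e. lra.
Qed.

Lemma fmu_bound mu f : 0 < mu ->
  (forall x, 0 <= x <= 1 -> filterlim f (within (fun y => 0 <= y <= 1) (locally x)) (locally (f x))) ->
  exists M, forall t, 0 < t < 1 -> Rabs (fmu mu f t) <= M.
Proof.
  intros hmu hf. destruct (cont_bound (Uf mu f) (Uf_cont mu f hmu hf)) as [M [_ hM]].
  exists M. intros t ht. rewrite <- Uf_eq by lra. apply hM. lra.
Qed.

Theorem theorem5p1 (mu : R) (f : R -> R) (hmu : 0 < mu)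
  (hf : forall x, 0 <= x <= 1 ->
        filterlim f (within (fun y => 0 <= y <= 1) (locally x)) (locally (f x))) :
  (forall x, 0 < x < 1 ->
     is_lim_seq (fun n => INR n * Rabs (LK mu n f x - f x)) 0)
  <->
  (exists d1 d2 : R -> R,
     forall x, 0 < x < 1 ->
       is_derive (fmu mu f) x (d1 x) /\ is_derive d1 x (d2 x) /\
       Acoef mu x * d1 x + Bcoef x * d2 x = 0).
Proof.
  destruct (fmu_bound mu f hmu hf) as [M hM].
  split.
  - intro H.
    set (U := Uf mu f).
    assert (hU : forall t, continuity_pt U t) by (apply Uf_cont; auto).
    assert (hl : forall x0, 0 < x0 < 1 -> is_lim_seq (fun n => INR n * (Tn mu n U x0 - U x0)) 0).
    { intros x0 hx0. specialize (H x0 hx0).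
      pose proof (lnmu_pos mu x0 hmu ltac:(lra)) as hln.
      assert (H' : is_lim_seq (fun n => INR n * (LK mu n f x0 - f x0)) 0).
      { apply (is_lim_seq_le_le (fun n => - (INR n * Rabs (LK mu n f x0 - f x0))) _ (fun n => INR n * Rabs (LK mu n f x0 - f x0))).
        - intro n. pose proof (pos_INR n). pose proof (Rle_abs (LK mu n f x0 - f x0)).
          pose proof (Rle_abs (- (LK mu n f x0 - f x0))). rewrite Rabs_Ropp in H2. nra.
        - apply (lim_eq _ (- 0)); [|ring]. apply (is_lim_seq_opp _ 0). auto.
        - auto. }
      apply (lim_eq _ (/ lnmu mu x0 * 0)); [|ring].
      apply (is_lim_seq_ext (fun n => / lnmu mu x0 * (INR n * (LK mu n f x0 - f x0)))).
      - intro n. unfold U. rewrite (Tn_ext mu n (Uf mu f) (fmu mu f)) by (intros; apply Uf_eq; auto).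
        rewrite Uf_eq by lra. rewrite LK_Tn. unfold fmu. field. lra.
      - apply is_lim_seq_mult'; auto. apply is_lim_seq_const. }
    destruct (GLOB mu U hmu hU hl) as [c1 [c2 hrep]].
    assert (hrep' : forall t, 0 < t < 1 -> fmu mu f t = c1 + c2 * Sfun mu t).
    { intros t ht. rewrite <- hrep by auto. unfold U. rewrite Uf_eq; auto. lra. }
    pose proof (C2Z mu (fmu mu f) c1 c2 M hmu hM hrep') as hc2. subst c2.
    exists (fun _ => 0), (fun _ => 0). intros x hx. split; [|split].
    + apply (is_derive_ext_loc (fun _ => c1)).
      apply (locally_interval x 0 1); auto. intros t ht. rewrite hrep' by auto. rewrite Rmult_0_l, Rplus_0_r. reflexivity.
      apply (is_derive_const c1).
    + apply (is_derive_const 0).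
    + ring.
  - intros [d1 [d2 H]] x hx.
    destruct (BW mu f d1 d2 hmu H) as [c1 [c2 hrep]].
    pose proof (C2Z mu (fmu mu f) c1 c2 M hmu hM hrep) as hc2. subst c2.
    apply (is_lim_seq_ext (fun _ => 0)); [|apply is_lim_seq_const].
    intro n. rewrite LK_Tn.
    rewrite (Tn_ext_open mu n (fmu mu f) (fun _ => c1)) by (intros; rewrite hrep by auto; ring).
    rewrite Tn_const.
    pose proof (lnmu_pos mu x hmu ltac:(lra)) as hln.
    assert (f x = lnmu mu x * c1).
    { pose proof (hrep x hx) as e. unfold fmu in e. rewrite Rmult_0_l, Rplus_0_r in e.
      rewrite <- e. field. lra. }
    rewrite H0. rewrite Rminus_diag_eq by auto. rewrite Rabs_R0. ring.
Qed.
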